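(* Let $n,d$ be positive integers and let $V=\mathbb{R}[\mathsf{x}]_{\leq d}$ be the $\mathfrak{S}_n$-module of all real polynomials of degree at most $d$ in the $\binom{n}{2}$ variables $\mathsf{x}_{ij}$, $1\le i<j\le n$. Then the multiplicity $m_{\bm{\lambda}}$ of the irreducible module $S_{\bm{\lambda}}$ in the decomposition of $V$ into irreducible $\mathfrak{S}_n$-modules is zero unless $\bm{\lambda}\geq_{\textup{lex}}(n-2d,1^{2d})$; that is, \[ V=\bigoplus_{\bm{\lambda}\geq_{\textup{lex}}(n-2d,1^{2d})} V_{\bm{\lambda}}.\]
   Context: $\mathbb{R}[\mathsf{x}]$ is the polynomial ring in the variables $\mathsf{x}_{ij}$, $1\le i<j\le n$ (write $\mathsf{x}_{ji}:=\mathsf{x}_{ij}$), and $\mathbb{R}[\mathsf{x}]_{\le d}$ is its subspace of polynomials of degree at most $d$. The symmetric group $\mathfrak{S}_n$ acts on $\mathbb{R}[\mathsf{x}]$ by ring automorphisms determined by $\mathfrak{s}\cdot\mathsf{x}_{ij}=\mathsf{x}_{\mathfrak{s}(i)\mathfrak{s}(j)}$; this preserves $\mathbb{R}[\mathsf{x}]_{\le d}$. The irreducible real $\mathfrak{S}_n$-modules are $S_{\bm{\lambda}}$, indexed by partitions $\bm{\lambda}\vdash n$. For an $\mathfrak{S}_n$-module $V$, the isotypic component $V_{\bm{\lambda}}$ is the span of all submodules of $V$ isomorphic to $S_{\bm{\lambda}}$, and $V=\bigoplus_{\bm{\lambda}\vdash n}V_{\bm{\lambda}}$ is the isotypic decomposition;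 $m_{\bm{\lambda}}$ is the number of copies of $S_{\bm{\lambda}}$ in $V$. Partitions are written as weakly decreasing sequences of positive parts; $(n-2d,1^{2d})$ denotes the hook partition with first part $n-2d$ followed by $2d$ parts equal to $1$. $\bm{\lambda}\geq_{\textup{lex}}\bm{\mu}$ means $\bm{\lambda}$ is lexicographically greater than or equal to $\bm{\mu}$ (comparing parts in order). *)

(* Defs.v *)
From HB Require Import structures.
From mathcomp Require Import all_boot all_algebra all_fingroup.
From mathcomp Require Import reals.
From mathcomp Require Import mpoly.

Set Implicit Arguments.
Unset Strict Implicit.
Unset Printing Implicit Defensive.
Import GRing.Theory.
Local Open Scope ring_scope.

Definition is_partition (n : nat) (lam : seq nat) : bool :=
  [&& sorted geq lam, all (fun k => 0 < k)%N lam & sumn lam == n].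

Definition lex_ge (lam mu : seq nat) : Prop :=
  lam = mu \/
  exists i : nat, (forall j, (j < i)%N -> nth 0%N lam j = nth 0%N mu j) /\
                  (nth 0%N mu i < nth 0%N lam i)%N.

Definition hook (n d : nat) : seq nat := (n - 2 * d)%N :: nseq (2 * d) 1%N.

(* Cells of the Young diagram of lam are numbered 0..n-1 in row-reading
   order; rowof/colof give the row and column of cell number k. *)
Definition rowof (lam : seq nat) (k : nat) : nat :=
  \sum_(r < size lam) (sumn (take r.+1 lam) <= k)%N.
Definition colof (lam : seq nat) (k : nat) : nat :=
  (k - sumn (take (rowof lam k) lam))%N.

(* A tableau of shape lam is given by rho : 'S_n: entry rho k in cell k.
   A tabloid is encoded as the function (entry |-> row of that entry). *)
Definition tabloid_t (n : nat) := {ffun 'I_n -> 'I_n.+1}.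

Definition tabloid_of (n : nat) (lam : seq nat) (rho : 'S_n) : tabloid_t n :=
  [ffun i => inord (rowof lam (rho^-1 i)%g)].

Definition Mmod (R : realType) (n : nat) := {ffun tabloid_t n -> R^o}.

Definition tdelta (R : realType) (n : nat) (t : tabloid_t n) : Mmod R n :=
  [ffun s => (s == t)%:R].

Definition actM (R : realType) (n : nat) (pi : 'S_n) (f : Mmod R n) : Mmod R n :=
  [ffun t : tabloid_t n => f [ffun i => t (pi i)]].

Definition colstab (n : nat) (lam : seq nat) (sigma tau : 'S_n) : bool :=
  [forall i, colof lam (sigma^-1 (tau i))%g == colof lam (sigma^-1 i)%g].

(* polytabloid e_T for the tableau T = sigma: sum over the column stabilizer
   of sgn(tau) {tau T}; the tableau tau T has entry tau (sigma k) in cell k,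
   i.e. it is the tableau (sigma * tau) (mathcomp composes left to right) *)
Definition polytabloid (R : realType) (n : nat) (lam : seq nat) (sigma : 'S_n)
  : Mmod R n :=
  \sum_(tau : 'S_n | colstab lam sigma tau)
     ((-1) ^+ odd_perm tau) *: tdelta R (tabloid_of lam (sigma * tau)%g).

Definition in_specht (R : realType) (n : nat) (lam : seq nat) (v : Mmod R n)
  : Prop :=
  exists c : 'S_n -> R, v = \sum_(sigma : 'S_n) c sigma *: polytabloid R lam sigma.

Definition pair_t (n : nat) := {A : {set 'I_n} | #|A| == 2%N}.
Definition nvars (n : nat) : nat := #|{: pair_t n}|.

Definition xvar (n : nat) (i : 'I_(nvars n)) : pair_t n := enum_val i.

Definition pairact (n : nat) (pi : 'S_n) (A : pair_t n) : pair_t n :=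
  insubd A (pi @: val A).

Definition varact (n : nat) (pi : 'S_n) (a : 'I_(nvars n)) : 'I_(nvars n) :=
  enum_rank (pairact pi (xvar a)).

Definition actP (R : realType) (n : nat) (pi : 'S_n) (p : {mpoly R[nvars n]})
  : {mpoly R[nvars n]} :=
  p \mPo [tuple 'X_(varact pi a) | a < nvars n].

Definition deg_le (R : realType) (n d : nat) (p : {mpoly R[nvars n]}) : bool :=
  (msize p <= d.+1)%N.

(* V contains a submodule isomorphic to S^lam (i.e. m_lam > 0): there is an
   injective S_n-equivariant R-linear map from S^lam into V.  (Any linear map
   defined on the subspace S^lam extends linearly to M^lam.) *)
Definition contains_copy (R : realType) (n d : nat) (lam : seq nat) : Prop :=
  exists f : {linear Mmod R n -> {mpoly R[nvars n]}},
    [/\ forall v, in_specht lam v -> deg_le d (f v),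
        forall v, in_specht lam v -> f v = 0 -> v = 0
      & forall (pi : 'S_n) v, in_specht lam v -> f (actM pi v) = actP pi (f v)].

(* Main.v *)
Require Import Defs.
From mathcomp Require Import all_boot all_algebra all_fingroup.
From mathcomp Require Import reals.
From mathcomp Require Import mpoly.
From mathcomp Require Import zify.
From mathcomp Require Import lra.
Lemma sumn_take_S (s : seq nat) r :
  sumn (take r.+1 s) = (sumn (take r s) + nth 0%N s r)%N.
Proof.
elim: s r => [|x s IH] [|r] /=; try by [].
  by rewrite take0 /= addn0 add0n.
by rewrite IH addnA.
Qed.

Lemma mono_le (S : nat -> nat) (mono : forall r, (S r <= S r.+1)%N) i j :
  (i <= j)%N -> (S i <= S j)%N.
Proof.
elim: j => [|j IH]; first by rewrite leqn0 => /eqP ->.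
rewrite leq_eqVlt => /orP [/eqP -> //| H].
by apply: leq_trans (IH H) (mono _).
Qed.

Lemma cnt_char (S : nat -> nat) (mono : forall r, (S r <= S r.+1)%N) k N :
  (\sum_(r < N) (S r.+1 <= k : nat) <= N)%N /\
  forall r, (r < N)%N -> (S r.+1 <= k)%N = (r < \sum_(r < N) (S r.+1 <= k : nat))%N.
Proof.
elim: N => [|N [IH1 IH2]]; first by rewrite big_ord0.
rewrite big_ord_recr /=.
case Hb: (S N.+1 <= k)%N => /=.
  have Hle : forall r, (r < N.+1)%N -> (S r.+1 <= k)%N.
    by move=> r Hr; apply: leq_trans Hb; apply: mono_le.
  have HN : \sum_(i < N) (S i.+1 <= k : nat) = N.
    apply/eqP; rewrite eqn_leq IH1 /=.
    rewrite -[X in (X <= _)%N]card_ord -sum1_card.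
    apply: leq_sum => i _.
    by rewrite Hle // ltnS ltnW.
  rewrite HN addn1; split => // r Hr.
  by rewrite Hr Hle.
rewrite addn0; split; first by apply: leq_trans IH1 _.
move=> r; rewrite ltnS leq_eqVlt => /orP [/eqP ->|Hr]; last exact: IH2.
by rewrite Hb ltnNge IH1.
Qed.

Section Part.
Variables (n : nat) (lam : seq nat).
Hypothesis Hlam : is_partition n lam.

Let S r := sumn (take r lam).

Lemma S_mono r : (S r <= S r.+1)%N.
Proof. by rewrite /S sumn_take_S leq_addr. Qed.

Lemma rowof_char k : (k < n)%N ->
  [/\ (rowof lam k < size lam)%N, (S (rowof lam k) <= k)%N & (k < S (rowof lam k).+1)%N].
Proof.
move=> Hk.
have Hn : sumn lam = n by case/and3P: Hlam => _ _ /eqP.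
have [H1 H2] := @cnt_char S S_mono k (size lam).
rewrite /rowof.
set m := \sum_(r < size lam) _ in H1 H2 *.
have Hm : (m < size lam)%N.
  rewrite ltn_neqAle H1 andbT; apply/eqP => Em.
  case Es: (size lam) Em H2 => [|N] Em H2.
    by move: Hk; rewrite -Hn; case: lam Es.
  have := H2 N (leqnn _); rewrite Em ltnSn -Es /S take_size Hn.
  by rewrite leqNgt Hk.
split => //.
  case: m Hm H1 H2 => [|m'] Hm _ H2; first by rewrite /S take0.
  by rewrite H2 ?ltnSn // ltnW.
by rewrite ltnNge H2 // ltnn.
Qed.

Lemma size_le : (size lam <= n)%N.
Proof.
case/and3P: Hlam => _ Hpos /eqP <-.
elim: lam Hpos => [|x s IH] //= /andP [Hx Hs].
by rewrite -addn1 addnC leq_add // IH.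
Qed.

Lemma colof_lt k : (k < n)%N -> (colof lam k < nth 0%N lam 0)%N.
Proof.
move=> Hk; have [H1 H2 H3] := rowof_char k Hk.
rewrite /colof.
apply: (@leq_trans (nth 0%N lam (rowof lam k))).
  by rewrite ltn_subLR // -sumn_take_S.
case/and3P: Hlam => Hs _ _.
have := @sorted_leq_nth _ geq (fun a b c h1 h2 => leq_trans h2 h1) leqnn 0%N lam Hs 0%N (rowof lam k).
apply => //; rewrite inE //.
by apply: leq_ltn_trans H1.
Qed.

Lemma rowcol_inj k k' : (k < n)%N -> (k' < n)%N ->
  rowof lam k = rowof lam k' -> colof lam k = colof lam k' -> k = k'.
Proof.
move=> Hk Hk' Er; rewrite /colof Er.
have [_ A _] := rowof_char k Hk; have [_ B _] := rowof_char k' Hk'.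
rewrite /S Er in A.
move=> E; have := congr1 (addn (sumn (take (rowof lam k') lam))) E.
by rewrite !subnKC.
Qed.

End Part.

Lemma lex_hook n d lam : (0 < n)%N -> (0 < d)%N -> is_partition n lam ->
  (n - 2 * d <= nth 0%N lam 0)%N -> lex_ge lam (hook n d).
Proof.
move=> Hn Hd Hlam.
case/and3P: Hlam => Hs Hpos /eqP Hsum.
rewrite leq_eqVlt => /orP [/eqP E|Hlt]; last first.
  by right; exists 0%N; split.
case: lam E Hs Hpos Hsum => [|a rest] /= E Hs Hpos Hsum; first by move: Hn; rewrite -Hsum.
case/andP: Hpos => Ha Hpos.
have Hr : sumn rest = (2 * d)%N.
  move: Hsum; rewrite -E => Hs2.
  have: (2 * d < n)%N by rewrite -subn_gt0 E.
  move=> lt; apply/eqP; rewrite -(eqn_add2l (n - 2 * d)) Hs2 subnK // ltnW //.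
case: rest Hsum Hr Hs Hpos => [|b rest'] _ Hr Hs Hpos.
  by move: Hr => /= /esym/eqP; rewrite muln_eq0 /= eqn0Ngt Hd.
case/andP: Hpos => Hb Hpos.
case: (ltngtP 1 b) => [Hb1|Hb1|Eb]; last 1 first.
- left. rewrite /hook E.
  congr (_ :: _).
  have Hall: all (pred1 1%N) (b :: rest').
    rewrite /= -Eb eqxx /=.
    move: Hs => /= /andP [_ Hp].
    have := order_path_min (fun a b c h1 h2 => leq_trans h2 h1) Hp.
    rewrite -Eb => Hle.
    apply/allP => x Hx.
    have := allP Hle x Hx; have := allP Hpos x Hx.
    by rewrite /= => h1 h2; apply/eqP/anti_leq; rewrite h1 h2.
  move/all_pred1P: Hall => Hn1.
  have Hsz : size (b :: rest') = (2*d)%N by rewrite -Hr {2}Hn1 sumn_nseq mul1n.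
  by rewrite {1}Hn1 Hsz.
- right; exists 1%N; split.
    by move=> j; rewrite ltnS leqn0 => /eqP -> /=.
  rewrite /hook /=.
  have : (0 < 2 * d)%N by rewrite muln_gt0 Hd.
  by case: (2 * d)%N.
- by exfalso; move: Hb1 Hb; clear; lia.
Qed.

Import GRing.Theory.
Local Open Scope ring_scope.
Section Specht.
Variables (R : realType) (n : nat) (lam : seq nat).

Lemma polyt1E (s : tabloid_t n) :
  polytabloid R lam (1 : 'S_n) s =
  \sum_(tau : 'S_n | colstab lam 1 tau)
     (-1) ^+ odd_perm tau * (s == tabloid_of lam tau)%:R.
Proof.
rewrite /polytabloid sum_ffunE; apply: eq_bigr => tau _.
by rewrite !ffunE mul1g eq_sym.
Qed.

Lemma colstab1 (tau : 'S_n) :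
  colstab lam 1 tau = [forall i, colof lam (tau i) == colof lam i].
Proof. by rewrite /colstab invg1; apply: eq_forallb => i; rewrite !perm1. Qed.

Lemma actM_swap (i j : 'I_n) : i != j -> colof lam i = colof lam j ->
  Defs.actM (tperm i j) (polytabloid R lam 1) = - polytabloid R lam 1.
Proof.
move=> Hij Hc; set t := tperm i j.
have Hct : forall x, colof lam (t x) = colof lam x.
  by move=> x; rewrite /t; case: tpermP => // ->.
apply/ffunP => s; rewrite ffunE [RHS]ffunE !polyt1E -sumrN.
rewrite (reindex_inj (mulIg t)) /=.
apply: eq_big => [tau|tau _].
  rewrite !colstab1; apply: eq_forallb => x.
  by rewrite permM Hct.
rewrite odd_permM odd_tperm Hij.
have -> : ([ffun i0 => s (t i0)] == tabloid_of lam (tau * t)) = (s == tabloid_of lam tau).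
  have Ht : tabloid_of lam (tau * t) = [ffun k => tabloid_of lam tau (t k)].
    by apply/ffunP => k; rewrite !ffunE invMg permM tpermV.
  rewrite Ht; apply/eqP/eqP => [E|->]; last by [].
  apply/ffunP => k; have := congr1 (fun f : tabloid_t n => f (t k)) E.
  by rewrite !ffunE tpermK.
by rewrite addbT; case: (odd_perm tau); rewrite /= ?expr0 ?expr1 ?mulN1r ?mul1r ?opprK.
Qed.

Hypothesis Hlam : is_partition n lam.

Lemma polyt1_at1 : polytabloid R lam (1 : 'S_n) (tabloid_of lam 1) = 1.
Proof.
rewrite polyt1E (bigD1 1%g); last by rewrite colstab1; apply/forallP => x; rewrite perm1.
rewrite odd_perm1 expr0 eqxx mul1r [X in _ + X = _]big1 ?addr0 //.
move=> tau /andP [Hc Hne].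
case E: (_ == _); last by rewrite mulr0.
exfalso; move/negP: Hne; apply; apply/eqP/permP => k; rewrite perm1.
have Hrow : forall x : 'I_n, (rowof lam x < n.+1)%N.
  move=> x; have [H1 _ _] := @rowof_char n lam Hlam x (ltn_ord x).
  by apply: leq_trans H1 _; apply: leq_trans (@size_le n lam Hlam) _.
move/eqP: E => /(congr1 (fun f : tabloid_t n => nat_of_ord (f (tau k)))).
rewrite !ffunE !inordK // invg1 perm1 permK => Er.
move: Hc; rewrite colstab1 => /forallP /(_ k) /eqP Ec.
apply: val_inj; apply: (@rowcol_inj n lam Hlam) => //; exact: ltn_ord.
Qed.

End Specht.
Lemma pairact_val n (pi : 'S_n) (A : pair_t n) :
  val (pairact pi A) = [set pi x | x in val A].
Proof.
rewrite /pairact val_insubd card_imset; last exact: perm_inj.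
by rewrite (valP A).
Qed.

Lemma pairact_inj n (pi : 'S_n) : injective (pairact pi).
Proof.
move=> A B E; apply: val_inj; apply: (imset_inj (@perm_inj _ pi)).
by rewrite -!pairact_val E.
Qed.

Lemma varact_inj n (pi : 'S_n) : injective (varact pi).
Proof.
move=> a b /enum_rank_inj /pairact_inj; exact: enum_val_inj.
Qed.

Lemma actP_msym (R : realType) n (pi : 'S_n) (p : {mpoly R[nvars n]}) :
  actP pi p = msym (perm (@varact_inj n pi)) p.
Proof.
rewrite -[RHS]comp_mpoly_id msym_mPo /actP; congr (_ \mPo _).
by apply: eq_mktuple => a; rewrite tnth_mktuple permE.
Qed.

Lemma varact_fix n (pi : 'S_n) (a : 'I_(nvars n)) :
  (forall x, x \in val (xvar a) -> pi x = x) -> varact pi a = a.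
Proof.
move=> H; rewrite /varact.
have -> : pairact pi (xvar a) = xvar a.
  apply: val_inj; rewrite pairact_val.
  apply/setP => y; apply/imsetP/idP => [[x Hx ->]|Hy]; first by rewrite H.
  by exists y => //; rewrite H.
exact: enum_valK.
Qed.

Lemma card_bigcup_le (I T : finType) (P : pred I) (F : I -> {set T}) :
  (#|\bigcup_(i | P i) F i| <= \sum_(i | P i) #|F i|)%N.
Proof.
apply: (big_ind2 (fun (A : {set T}) (k : nat) => #|A| <= k)%N) => //.
- by rewrite cards0.
- move=> A1 k1 A2 k2 H1 H2; apply: leq_trans (leq_add H1 H2).
  exact: leq_card_setU.
Qed.


Theorem theorem2p4 (R : realType) (n d : nat) :
  (0 < n)%N -> (0 < d)%N ->
  forall lam : seq nat, is_partition n lam ->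
    contains_copy R n d lam -> lex_ge lam (hook n d).
Proof.
move=> Hn Hd lam Hlam [f [Hdeg Hinj Heq]].
have [Hle|Hlt] := leqP (n - 2 * d) (nth 0%N lam 0); first exact: lex_hook.
exfalso.
set e := polytabloid R lam (1 : 'S_n).
have He : in_specht lam e.
  exists (fun s : 'S_n => (s == 1%g)%:R); rewrite (bigD1 1%g) //= eqxx scale1r big1 ?addr0 //.
  by move=> s /negbTE ->; rewrite scale0r.
have Hp : f e = 0.
  apply/mpolyP => m; rewrite mcoeff0.
  case Hm: (m \in msupp (f e)); last by apply/eqP; rewrite mcoeff_eq0 Hm.
  have Hdm : (mdeg m <= d)%N.
    have := msize_mdeg_lt Hm; have := Hdeg e He; rewrite /deg_le => H1 H2.
    by rewrite -ltnS; apply: leq_trans H2 H1.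
  pose U := \bigcup_(a | m a != 0%N) val (xvar a).
  have HU : (#|U| <= 2 * d)%N.
    apply: leq_trans (@card_bigcup_le _ _ (fun a => m a != 0%N) (fun a => val (xvar a))) _.
    apply: (@leq_trans (\sum_a 2 * m a)%N).
      rewrite big_mkcond /=; apply: leq_sum => a _.
      case: ifP => // Ha; rewrite (eqP (valP (xvar a))).
      by move: Ha; clear; lia.
    by rewrite -big_distrr /= -mdegE leq_mul2l Hdm orbT.
  pose W := ~: U.
  have HC := cardsC U.
  rewrite card_ord in HC.
  have HW : (nth 0%N lam 0 < #|W|)%N by rewrite /W; lia.
  pose g := fun x : 'I_n => Ordinal (@colof_lt n lam Hlam x (ltn_ord x)).
  have : ~~ dinjectiveb g W.
    apply/negP => /dinjectiveP Hinj'.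
    have := card_in_imset Hinj'.
    by have := max_card (g @: W); rewrite card_ord; move=> H1 H2; move: HW; rewrite -H2 ltnNge H1.
  case/dinjectivePn => i Hi [j /andP [Hji Hj] Egij].
  have Hc : colof lam i = colof lam j by have := congr1 val Egij.
  have Hij : i != j by rewrite eq_sym.
  set t := tperm i j.
  have Hfix : forall a, m a != 0%N -> varact t a = a.
    move=> a Ha; apply: varact_fix => x Hx.
    have HxU : x \in U by apply/bigcupP; exists a.
    apply: tpermD.
      by apply: contraTneq HxU => <-; rewrite -in_setC.
    by apply: contraTneq HxU => <-; rewrite -in_setC.
  have E1 := Heq t e He.
  rewrite (@actM_swap R n lam i j Hij Hc) linearN in E1.
  have := congr1 (mcoeff m) E1.
  rewrite mcoeffN actP_msym mcoeff_sym.
  have -> : [multinom m (perm (@varact_inj n t) a) | a < nvars n] = m.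
    apply/mnmP => a; rewrite mnmE permE.
    case: (boolP (m a == 0%N)) => [/eqP Ha|Ha]; last by rewrite Hfix.
    case: (boolP (m (varact t a) == 0%N)) => [/eqP -> //|Hb].
    have E := @varact_inj n t _ _ (Hfix _ Hb).
    by move: Hb; rewrite E Ha.
  by move=> E; lra.
have := Hinj e He Hp.
move/(congr1 (fun v : Mmod R n => v (tabloid_of lam 1))).
by rewrite (@polyt1_at1 R n lam Hlam) ffunE => /eqP; rewrite oner_eq0.
Qed.
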